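(* Let $l_n,R_n>0$ ($n\in\mathbb N$) satisfy $l_n,R_n\to\infty$, $l_n^2/n\to0$, $n/R_n\to0$, $e^{-\pi l_n/2}R_n\to0$, and let $W_n(z)=\exp\!\big(-l_n\pi-il_n\log\frac{z-n}{z+n}\big)$ for $z\in\mathbb C_+$. Then for all sufficiently large $n$, $$|W_n(z)|<e^{-\pi l_n/2}\quad\text{for all } z\in\mathbb C_+ \text{ with } |z|=R_n.$$
   Context: $\mathbb C_+=\{\operatorname{Im}z>0\}$. For $z\in\mathbb C_+$ one has $\frac{z-n}{z+n}\in\mathbb C_+$, and $\log$ denotes the branch with imaginary part in $(0,\pi)$. *)

(* Defs.v *)
From Stdlib Require Import Reals.
From Coquelicot Require Import Coquelicot.
Open Scope R_scope.

Definition Cexp (z : C) : C :=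
  (exp (Re z) * cos (Im z), exp (Re z) * sin (Im z)).

(** Branch of log on the upper half plane with imaginary part in (0, pi):
    log w = ln |w| + i arg w, arg w = acos (Re w / |w|) in (0,pi) when Im w > 0. *)
Definition Clog_up (w : C) : C :=
  (ln (Cmod w), acos (Re w / Cmod w)).

Definition W (l : nat -> R) (n : nat) (z : C) : C :=
  Cexp (Cminus (RtoC (- l n * PI))
               (Cmult (Cmult Ci (RtoC (l n)))
                      (Clog_up (Cdiv (Cminus z (RtoC (INR n)))
                                     (Cplus z (RtoC (INR n))))))).

(* Main.v *)
Require Import Defs.
From Stdlib Require Import Reals.
From Coquelicot Require Import Coquelicot.
From Stdlib Require Import Lra Psatz.
Open Scope R_scope.

Lemma Cmod_Cexp (z : C) : Cmod (Cexp z) = exp (Re z).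
Proof.
  unfold Cmod, Cexp; cbn [fst snd].
  replace ((exp (Re z) * cos (Im z)) ^ 2 + (exp (Re z) * sin (Im z)) ^ 2)
    with (exp (Re z) ^ 2 * (sin (Im z) ^ 2 + cos (Im z) ^ 2)) by ring.
  replace (sin (Im z) ^ 2 + cos (Im z) ^ 2) with 1 by (rewrite <- (sin2_cos2 (Im z)); unfold Rsqr; ring).
  rewrite Rmult_1_r.
  apply sqrt_pow2. left; apply exp_pos.
Qed.

Lemma acos_lt_half (x : R) : 0 < x -> acos x < PI / 2.
Proof.
  intro Hx. rewrite acos_atan by exact Hx. apply atan_bound.
Qed.

Lemma re_pos (z : C) (n R0 : R) : 0 < Im z -> Cmod z = R0 -> 0 <= n < R0 ->
  0 < Re (Cdiv (Cminus z (RtoC n)) (Cplus z (RtoC n))).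
Proof.
  destruct z as [x y]. unfold Cmod, Cdiv, Cminus, Cplus, Cmult, Cinv, Copp, RtoC, Re, Im; simpl.
  intros Hy Hm Hn.
  assert (Hxy : x*x + y*y = R0*R0).
  { rewrite <- Hm. rewrite sqrt_sqrt; nra. }
  assert (Hd : 0 < (x + n) * ((x + n) * 1) + (y + 0) * ((y + 0) * 1)).
  { replace ((x + n) * ((x + n) * 1) + (y + 0) * ((y + 0) * 1)) with ((x+n)*(x+n) + y*y) by ring.
    pose proof (Rle_0_sqr (x+n)). unfold Rsqr in *.
    assert (0 < y*y) by (apply Rmult_lt_0_compat; lra). lra. }
  set (d := (x + n) * ((x + n) * 1) + (y + 0) * ((y + 0) * 1)) in *.
  replace ((x + - n) * ((x + n) / d) - (y + - 0) * (- (y + 0) / d))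
    with ((x*x + y*y - n*n) / d) by (field; lra).
  apply Rdiv_lt_0_compat; nra.
Qed.

Theorem lemma4 (l Rn : nat -> R)
  (hl : forall n, 0 < l n) (hR : forall n, 0 < Rn n)
  (hl_inf : is_lim_seq l p_infty) (hR_inf : is_lim_seq Rn p_infty)
  (hl2 : is_lim_seq (fun n => (l n) ^ 2 / INR n) 0)
  (hnR : is_lim_seq (fun n => INR n / Rn n) 0)
  (hexp : is_lim_seq (fun n => exp (- PI * l n / 2) * Rn n) 0) :
  exists N : nat, forall n : nat, (N <= n)%nat ->
    forall z : C, 0 < Im z -> Cmod z = Rn n ->
      Cmod (W l n z) < exp (- PI * l n / 2).
Proof.
  apply is_lim_seq_spec in hnR.
  destruct (hnR (mkposreal (1/2) ltac:(lra))) as [N HN].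
  exists N. intros n Hn z Hz Hm.
  specialize (HN n Hn). simpl in HN.
  assert (HnR : INR n < Rn n).
  { pose proof (hR n). pose proof (pos_INR n).
    assert (INR n / Rn n < 1) by (apply Rabs_def2 in HN; lra).
    apply Rmult_lt_reg_r with (/ Rn n). apply Rinv_0_lt_compat; lra.
    rewrite Rinv_r by lra. exact H1. }
  set (w := Cdiv (Cminus z (RtoC (INR n))) (Cplus z (RtoC (INR n)))).
  assert (Hw : 0 < Re w).
  { apply re_pos with (Rn n); auto. split; [apply pos_INR|lra]. }
  assert (Hmw : 0 < Cmod w).
  { eapply Rlt_le_trans; [exact Hw|]. eapply Rle_trans; [apply Rle_abs|apply re_le_Cmod]. }
  assert (Hac : acos (Re w / Cmod w) < PI / 2).
  { apply acos_lt_half. apply Rdiv_lt_0_compat; auto. }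
  unfold W. fold w. rewrite Cmod_Cexp.
  apply exp_increasing.
  unfold Clog_up. clearbody w.
  set (a := acos (Re w / Cmod w)) in *. set (b := ln (Cmod w)).
  clearbody a b.
  unfold Cminus, Cplus, Cmult, Copp, RtoC, Ci, Re, Im in *; simpl.
  pose proof (hl n). nra.
Qed.
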